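(* Fix $k=1$ and $\epsilon$ with $0\le\epsilon\le1/2$, and assume $\sqrt n\le m^{\epsilon}$. Any deterministic coverage oracle that stores a datastructure of at most $b=nm^{1-2\epsilon}$ bits does not attain an approximation ratio of $O(n^{1/2-\delta})$ for any constant $\delta>0$.
   Context: A set system with $n$ items and $m$ sets is a pair $(\mathcal X,\mathcal I)$ with $\mathcal X=\{1,\dots,n\}$ and $\mathcal I$ an indexed family of $m$ subsets of $\mathcal X$. For $k\ge1$ and a query $Q\subseteq\mathcal X$, $OPT(k,\mathcal X,\mathcal I,Q)=\max\{|(\bigcup_{S\in\mathcal J}S)\cap Q| : \mathcal J\subseteq\mathcal I,|\mathcal J|\le k\}$. A deterministic coverage oracle consists of a deterministic static stage mapping $(n,m,k,(\mathcal X,\mathcal I))$ to a bit string $\mathcal D$ (the datastructure), and a deterministic dynamic stage mapping $(\mathcal D,Q)$, for $Q\subseteq\mathcal X$, to (indices of) $\mathcal J\subseteq\mathcal I$ with $|\mathcal J|\le k$, without access to $(\mathcal X,\mathcal I)$; $\mathcal A(k,\mathcal X,\mathcal I,Q)=|(\bigcup_{S\in\mathcal J}S)\cap Q|$. The approximation ratio is $\max OPT/\mathcal A$ over all set systems with $n$ items and $m$ sets and all queries $Q$. No computational restrictions are assumed. *)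

(* Defs.v *)
From Stdlib Require Import Reals.
From mathcomp Require Import all_boot.
Set Implicit Arguments. Unset Strict Implicit. Unset Printing Implicit Defensive.

Definition setsys (n m : nat) := 'I_m -> {set 'I_n}.

Definition coverage (n m : nat) (I : setsys n m) (J : {set 'I_m})
  (Q : {set 'I_n}) : nat :=
  #|(\bigcup_(i in J) I i) :&: Q|.

Definition OPT (k n m : nat) (I : setsys n m) (Q : {set 'I_n}) : nat :=
  \max_(J : {set 'I_m} | #|J| <= k) coverage I J Q.

Definition valid_params (eps : R) (n m : nat) : Prop :=
  (0 < m)%nat /\ Rle (sqrt (INR n)) (Rpower (INR m) eps).

Definition static_stage := forall n m : nat, setsys n m -> seq bool.
(* Deterministic dynamic stage: (n, m, datastructure, query) -> indices of
   chosen sets. It has no access to the set system. *)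
Definition dynamic_stage := forall n m : nat, seq bool -> {set 'I_n} -> {set 'I_m}.

(* Main.v *)
Require Import Defs.
From Stdlib Require Import Reals Lra Lia Psatz Classical.
From HB Require Import structures.
From mathcomp Require Import all_boot all_algebra.
Set Implicit Arguments. Unset Strict Implicit. Unset Printing Implicit Defensive.

Section Pool.
Import GRing.Theory.
Local Open Scope ring_scope.
Variables p d : nat.
Local Notation F := ('F_p).
Definition pol (a : d.-tuple F) : {poly F} := \poly_(i < d) a`_i.
Definition Sg (a : d.-tuple F) : {set F * F} :=
  [set (x, (pol a).[x]) | x : F].

Lemma card_Sg a : #|Sg a| = #|F|.
Proof. by rewrite card_imset // => x y [] . Qed.

Lemma card_SgI a b : a != b -> (#|Sg a :&: Sg b| < d)%N.
Proof.
move=> nab.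
set q := pol a - pol b.
have q0 : q != 0.
  apply: contra nab; rewrite /q subr_eq0 => /eqP E.
  apply/eqP/val_inj/(@eq_from_nth _ 0); first by rewrite !size_tuple.
  move=> i; rewrite size_tuple => hi.
  have := congr1 (fun r : {poly F} => r`_i) E.
  by rewrite /pol !coef_poly hi.
have sq : (size q <= d)%N.
  apply: leq_trans (size_polyD _ _) _; rewrite size_polyN geq_max.
  by rewrite !size_poly.
set R := [set x : F | root q x].
have hR : (#|R| < size q)%N.
  rewrite cardE; apply: max_poly_roots => //; last exact: enum_uniq.
  by apply/allP => x; rewrite mem_enum inE.
apply: leq_ltn_trans _ (leq_trans hR sq).
apply: leq_trans (leq_imset_card (fun x => (x, (pol a).[x])) R).
apply: subset_leq_card; apply/subsetP => z /setIP [/imsetP [x _ ->] /imsetP [y _ [ex ey]]].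
apply/imsetP; exists x => //.
by rewrite inE /root /q hornerD hornerN ey ex subrr.
Qed.

End Pool.

Section Core.
Variables p d : nat.
Local Notation F := ('F_p).
Local Notation T := (F * F)%type.
Local Notation P := (d.-tuple F).
Local Notation n := #|{: T}|.
Local Notation m := #|{: P}|.

Definition Isys (s : {ffun 'I_m -> P}) : setsys n m :=
  fun j => enum_rank @: Sg (s j).
Definition Qa (a : P) : {set 'I_n} := enum_rank @: Sg a.

Lemma cov1 s j a : coverage (Isys s) [set j] (Qa a) = #|Sg (s j) :&: Sg a|.
Proof.
by rewrite /coverage big_set1 /Isys /Qa -imsetI ?card_imset //;
  [exact: enum_rank_inj | move=> x y _ _; exact: enum_rank_inj].
Qed.

Lemma cov0 s a : coverage (Isys s) set0 (Qa a) = 0.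
Proof. by rewrite /coverage big_set0 set0I cards0. Qed.

Lemma OPT_ge (s : {ffun 'I_m -> P}) (a : P) : injective s -> #|F| <= OPT 1 (Isys s) (Qa a).
Proof.
move=> injs.
have : a \in codom s by apply: inj_card_onto => //; rewrite card_ord.
case/codomP => j ->.
apply: leq_trans (leq_bigmax_cond [set j] _); last by rewrite cards1.
by rewrite cov1 setIid card_Sg.
Qed.

Definition enc (s : seq bool) : 'I_m.+1 * {ffun 'I_m -> bool} :=
  (inord (size s), [ffun i : 'I_m => nth false s i]).

Lemma enc_inj s1 s2 : size s1 <= m -> size s2 <= m -> enc s1 = enc s2 -> s1 = s2.
Proof.
move=> h1 h2 [] /(congr1 (@nat_of_ord _)); rewrite !inordK ?ltnS // => es ef.
apply: (@eq_from_nth _ false) => // i hi.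
have him : i < m by apply: leq_trans h1.
have := congr1 (fun f : {ffun 'I_m -> bool} => f (@Ordinal m i him)) ef; by rewrite !ffunE.
Qed.

Lemma core (st : setsys n m -> seq bool) (dy : seq bool -> {set 'I_n} -> {set 'I_m})
  (hs : forall I, size (st I) <= m) (hd : forall D Q, #|dy D Q| <= 1)
  (hd0 : 0 < d) (hm : m.+1 * 2 ^ m < m`!) :
  exists (s : {ffun 'I_m -> P}) (a : P),
    coverage (Isys s) (dy (st (Isys s)) (Qa a)) (Qa a) < d /\
    #|F| <= OPT 1 (Isys s) (Qa a).
Proof.
apply: NNPP => Hn.
have key : forall s : {ffun 'I_m -> P}, injective s -> forall a,
    exists j, dy (st (Isys s)) (Qa a) = [set j] /\ s j = a.
  move=> s injs a.
  have hopt := OPT_ge a injs.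
  have hcov : ~ coverage (Isys s) (dy (st (Isys s)) (Qa a)) (Qa a) < d.
    by move=> hc; apply: Hn; exists s, a.
  move: (hd (st (Isys s)) (Qa a)); rewrite leq_eqVlt ltnS leqn0; case/orP.
    case/cards1P => j ej; exists j; split => //.
    apply/eqP; apply: contraT => nj; exfalso; apply: hcov.
    by rewrite ej cov1 card_SgI.
  move/eqP/cards0_eq => e0; exfalso; apply: hcov; by rewrite e0 cov0.
pose A := [set s : {ffun 'I_m -> P} | injectiveb s].
pose Phi := fun s : {ffun 'I_m -> P} => enc (st (Isys s)).
have injPhi : {in A &, injective Phi}.
  move=> s1 s2; rewrite !inE => /injectiveP i1 /injectiveP i2 /enc_inj eD.
  have eD' := eD (hs _) (hs _).
  apply/ffunP => j.
  have [j1 [e1 f1]] := key s1 i1 (s1 j).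
  have [j2 [e2 f2]] := key s2 i2 (s1 j).
  have jj1 : j1 = j by apply: i1.
  move: e2; rewrite -eD' e1 jj1 => /set1_inj ej.
  by rewrite -f2 ej.
have := max_card (Phi @: A).
rewrite (card_in_imset injPhi) /A card_inj_ffuns card_ord ffactnn.
by rewrite card_prod card_ord card_ffun card_bool card_ord leqNgt hm.
Qed.

End Core.

Lemma fact_big m : 7 < m -> m.+1 * 2 ^ m < m`!.
Proof.
elim: m => // m IH hm.
case: (ltnP 7 m) => hm7; last first.
  by have -> : m = 7 by apply/eqP; rewrite eqn_leq hm7 -ltnS hm.
rewrite factS expnS.
apply: (@leq_ltn_trans ((m.+1 * m.+1) * 2 ^ m)).
  rewrite mulnA leq_mul2r; apply/orP; right.
  move/leP: hm7 => h7; apply/leP; rewrite -!multE; nia.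
by rewrite -mulnA ltn_pmul2l // IH.
Qed.

Lemma expn_pow a b : (a ^ b)%N = Nat.pow a b.
Proof. by elim: b => //= b IH; rewrite expnS IH. Qed.

Lemma INR_le_nat a b : Rle (INR a) (INR b) -> (a <= b)%N.
Proof. by move=> h; apply/leP; apply: INR_le. Qed.

Theorem mainTheorem8 (eps delta : R)
  (heps : Rlt 0 eps /\ Rle eps (1/2)) (hdelta : Rlt 0 delta)
  (st : static_stage) (dy : dynamic_stage)
  (hdy : forall n m (D : seq bool) (Q : {set 'I_n}),
      valid_params eps n m -> (#|dy n m D Q| <= 1)%N)
  (hspace : forall n m (I : setsys n m), valid_params eps n m ->
      Rle (INR (size (st n m I))) (Rmult (INR n) (Rpower (INR m) (1 - 2 * eps)))) :
  forall (C : R) (N0 : nat), Rlt 0 C ->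
    exists (n m : nat), (N0 <= n)%N /\ valid_params eps n m /\
      exists (I : setsys n m) (Q : {set 'I_n}),
        Rlt (Rmult (Rmult C (Rpower (INR n) (1/2 - delta)))
                   (INR (coverage I (dy n m (st n m I) Q) Q)))
            (INR (OPT 1 I Q)).
Proof.
move=> C N0 HC.
case: heps => he0 he1.
have [d hd] := INR_unbounded (1 / eps).
have hd' : Rlt 1 (INR d * eps).
  have := Rmult_lt_compat_r eps _ _ he0 hd.
  by rewrite /Rdiv Rmult_1_l Rinv_l; [|lra].
have d0 : (0 < d)%N.
  case: d hd hd' => //=; lra.
have dR : Rlt 0 (INR d) by apply: lt_0_INR; apply/ltP.
set K := exp (ln (C * INR d) / (2 * delta)).
have [k hk] := INR_unbounded K.
have [p hp pr] := prime_above (maxn (maxn k N0) 8).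
rewrite !gtn_max in hp; case/andP: hp => /andP [hpk hpN] hp8.
have pR : Rlt (INR k) (INR p) by apply: lt_INR; apply/ltP.
have p1 : Rle 1 (INR p).
  have : (1 <= p)%N by apply: leq_trans hp8.
  by move/leP/le_INR.
have p0 : Rlt 0 (INR p) by lra.
pose n := #|{: ('F_p * 'F_p)%type}|.
pose m := #|{: d.-tuple 'F_p}|.
have en : n = (p * p)%N by rewrite /n card_prod card_Fp.
have em : m = (p ^ d)%N by rewrite /m card_tuple card_Fp.
have nR : INR n = Rpower (INR p) (INR 2).
  rewrite en -multE mult_INR.
  rewrite Rpower_pow //=; ring.
have mR : INR m = Rpower (INR p) (INR d).
  rewrite em Rpower_pow // -pow_INR; f_equal; by rewrite expn_pow.
have valid : valid_params eps n m.
  split; first by rewrite em expn_gt0 (leq_trans _ hp8).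
  rewrite en -multE mult_INR sqrt_square; last lra.
  rewrite -multE in en.
  rewrite mR Rpower_mult -{1}(Rpower_1 (INR p)) //.
  apply: Rle_Rpower => //; lra.
have hs : forall I : setsys n m, (size (st n m I) <= m)%N.
  move=> I; apply: INR_le_nat.
  apply: Rle_trans (hspace n m I valid) _.
  have hn2 : Rle (INR n) (Rpower (INR m) (2 * eps)).
    rewrite nR mR Rpower_mult; apply: Rle_Rpower => //; simpl; lra.
  have mpos : Rlt 0 (INR m) by rewrite mR; apply: exp_pos.
  apply: Rle_trans (Rmult_le_compat_r _ _ _ _ hn2) _.
    by left; apply: exp_pos.
  rewrite -Rpower_plus -{2}(Rpower_1 (INR m)) //.
  right; f_equal; lra.
have hm : (m.+1 * 2 ^ m < m`!)%N.
  apply: fact_big; rewrite em.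
  apply: leq_trans (ltnW hp8) _.
  by rewrite -{1}(expn1 p) leq_pexp2l // (leq_trans _ hp8).
have [s [a [hcov hopt]]] := core hs (fun D Q => hdy n m D Q valid) d0 hm.
exists n, m; split.
  rewrite en; apply: leq_trans (ltnW hpN) _.
  by rewrite leq_pmull // (leq_trans _ hp8).
split => //.
exists (Isys s), (Qa a).
set cv := coverage _ _ _ in hcov *.
set op := OPT _ _ _ in hopt *.
rewrite card_Fp // in hopt.
have opR : Rle (INR p) (INR op) by apply: le_INR; apply/leP.
have cvR : Rle (INR cv) (INR d) by apply: le_INR; apply/leP; apply: ltnW.
apply: Rle_lt_trans _ (Rlt_le_trans _ _ _ _ opR).
  apply: Rmult_le_compat_l cvR.
  apply: Rmult_le_pos; first lra.
  by left; apply: exp_pos.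
Local Open Scope R_scope.
have e1 : Rpower (INR n) (1/2 - delta) = Rpower (INR p) (1 - 2 * delta).
  rewrite nR Rpower_mult; f_equal; simpl; lra.
rewrite e1.
have e2 : INR p = Rmult (Rpower (INR p) (1 - 2 * delta)) (Rpower (INR p) (2 * delta)).
  rewrite -Rpower_plus.
  have -> : Rplus (1 - 2 * delta) (2 * delta) = 1 by ring.
  by rewrite Rpower_1.
have hCd : Rlt (C * INR d) (Rpower (INR p) (2 * delta)).
  have Cd0 : Rlt 0 (C * INR d) by apply: Rmult_lt_0_compat.
  rewrite -{1}(exp_ln (C * INR d)) // /Rpower.
  apply: exp_increasing.
  have hlnp : Rlt (ln K) (ln (INR p)).
    apply: ln_increasing; first by apply: exp_pos.
    lra.
  rewrite /K ln_exp in hlnp.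
  have := Rmult_lt_compat_l (2 * delta) _ _ ltac:(lra) hlnp.
  rewrite /Rdiv -Rmult_assoc (Rmult_comm (2 * delta)) Rmult_assoc Rinv_r; lra.
rewrite {2}e2 Rmult_assoc (Rmult_comm (Rpower (INR p) (1 - 2 * delta))) -Rmult_assoc.
rewrite [X in _ < X]Rmult_comm. apply: Rmult_lt_compat_r => //; apply: exp_pos.
Qed.
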